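(* Let $G=(V,E)$ be a connected undirected unweighted graph on $n$ nodes, let $S\subseteq V$, and let $\delta\geq 1$ be a real number. Then the expected absorption time of the positional Voter process on $G$ with biased set $S$ and bias $\delta$ satisfies $\operatorname{T}(G^S,\delta)\leq n^5$.
   Context: Positional Voter model. A graph $G=(V,E,w)$ has node set $V$ with $|V|=n$, edge set $E\subseteq V\times V$ and weights $w\colon E\to\mathbb{R}_{>0}$; $\operatorname{in}(u)=\{v\in V:(v,u)\in E\}$. ''Undirected unweighted'' means $E$ is symmetric and $w\equiv 1$. A configuration is a set $X\subseteq V$ (the nodes carrying the novel trait $A$; the others carry trait $B$). Given a biased set $S\subseteq V$ and bias $\delta\ge 0$, define $f^S_X(v\mid u)=1+\delta$ if $v\in X$ and $u\in S$, and $f^S_X(v\mid u)=1$ otherwise. The process $(\mathcal{X}_t)_{t\ge0}$ evolves as follows: given $\mathcal{X}_t=X$, a node $u$ is chosen uniformly at random from $V$, then a node $v\in\operatorname{in}(u)$ is chosen with probability $\frac{f^S_X(v\mid u)\,w(v,u)}{\sum_{x\in\operatorname{in}(u)} f^S_X(x\mid u)\,w(x,u)}$, and $u$ adopts the trait of $v$, i.e. $\mathcal{X}_{t+1}=X\cup\{u\}$ if $v\in X$ and $\mathcal{X}_{t+1}=X\setminus\{u\}$ otherwise. Unless stated otherwise, $\mathcal{X}_0=\{u\}$ with $u$ uniformly random in $V$. The absorption time is the first $t$ with $\mathcal{X}_t\in\{\emptyset,V\}$, and $\operatorname{T}(G^S,\delta)$ denotes its expectation. *)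

(* Defs.v *)
From HB Require Import structures.
From mathcomp Require Import all_boot all_order all_algebra.
From mathcomp Require Import all_classical all_reals all_analysis.
Set Implicit Arguments. Unset Strict Implicit. Unset Printing Implicit Defensive.
Import Order.TTheory GRing.Theory Num.Theory.
Local Open Scope ring_scope.

(* Graph: node set V (finType), edge relation e (e v u means (v,u) \in E),
   weights identically 1 (unweighted). in(u) = [set v | e v u]. *)

Definition fbias (R : realType) (V : finType) (S : {set V}) (delta : R)
  (X : {set V}) (v u : V) : R :=
  if (v \in X) && (u \in S) then 1 + delta else 1.

Definition pick_prob (R : realType) (V : finType) (e : rel V) (S : {set V})
  (delta : R) (X : {set V}) (u v : V) : R :=
  if e v u then fbias S delta X v u / \sum_(x | e x u) fbias S delta X x u
  else 0.

Definition step (V : finType) (X : {set V}) (u v : V) : {set V} :=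
  if v \in X then u |: X else X :\ u.

Definition trans (R : realType) (V : finType) (e : rel V) (S : {set V})
  (delta : R) (X Y : {set V}) : R :=
  (#|V|%:R)^-1 * \sum_(u : V) \sum_(v : V)
     pick_prob e S delta X u v * ((step X u v == Y)%:R).

Definition absorbing (V : finType) (X : {set V}) : bool :=
  (X == finset.set0) || (X == [set: V]).

Definition init_dist (R : realType) (V : finType) (Y : {set V}) : R :=
  (#|V|%:R)^-1 * \sum_(u : V) ((Y == [set u])%:R).

(* surv t Y = P(X_t = Y and X_s is not absorbing for all s <= t) *)
Fixpoint surv (R : realType) (V : finType) (e : rel V) (S : {set V})
  (delta : R) (t : nat) (Y : {set V}) : R :=
  match t with
  | 0 => if absorbing Y then 0 else init_dist R Y
  | t'.+1 => if absorbing Y then 0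
             else \sum_(X : {set V}) surv e S delta t' X * trans e S delta X Y
  end.

(* P(tau > t), tau = absorption time *)
Definition surv_prob (R : realType) (V : finType) (e : rel V) (S : {set V})
  (delta : R) (t : nat) : R :=
  \sum_(Y : {set V}) surv e S delta t Y.

(* T(G^S, delta) = E[tau] = sum_{t >= 0} P(tau > t), in the extended reals *)
Definition absorption_time (R : realType) (V : finType) (e : rel V)
  (S : {set V}) (delta : R) : \bar R :=
  (\sum_(0 <= t <oo) (surv_prob e S delta t)%:E)%E.

(* Main.v *)
Require Import Defs.
From HB Require Import structures.
From mathcomp Require Import all_boot all_order all_algebra.
From mathcomp Require Import all_classical all_reals all_analysis.
From mathcomp Require Import ring lra.
Import Order.TTheory GRing.Theory Num.Theory.
Set Implicit Arguments. Unset Strict Implicit. Unset Printing Implicit Defensive.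
Local Open Scope ring_scope.

Definition cc (R : realType) (V : finType) (S : {set V}) (delta : R) (u : V) : R :=
  if u \in S then 1 + delta else 1.
Definition aa (R : realType) (V : finType) (e : rel V) (X : {set V}) (u : V) : R :=
  \sum_(v | e v u && (v \in X)) 1.
Definition bb (R : realType) (V : finType) (e : rel V) (X : {set V}) (u : V) : R :=
  \sum_(v | e v u && (v \notin X)) 1.

Lemma sum_const_pred (R : realType) (V : finType) (P : pred V) (k : R) :
  \sum_(v | P v) k = (\sum_(v | P v) 1) * k.
Proof. rewrite mulr_suml; apply: eq_bigr => i _; by rewrite mul1r. Qed.

Lemma W_eq (R : realType) (V : finType) (e : rel V) (S : {set V}) (delta : R) X u :
  \sum_(x | e x u) fbias S delta X x u = cc S delta u * (aa R e X u) + (bb R e X u).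
Proof.
rewrite (bigID (fun v => v \in X)) /=.
rewrite (eq_bigr (fun _ => cc S delta u)); last first.
  by move=> v /andP[_ vX]; rewrite /fbias /cc vX.
rewrite [in X in _ + X](eq_bigr (fun _ => 1)); last first.
  by move=> v /andP[_ vX]; rewrite /fbias (negbTE vX).
by rewrite sum_const_pred /aa /bb mulrC.
Qed.

Lemma pick_sum (R : realType) (V : finType) (e : rel V) (S : {set V}) (delta : R) X u
  (F : {set V} -> R) :
  \sum_v pick_prob e S delta X u v * F (step X u v) =
  (cc S delta u * (aa R e X u) * F (u |: X) + (bb R e X u) * F (X :\ u)) /
    \sum_(x | e x u) fbias S delta X x u.
Proof.
rewrite /pick_prob; set W := \sum_(x | e x u) fbias S delta X x u.
transitivity (\sum_(v | e v u) fbias S delta X v u / W * F (step X u v)).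
  rewrite [RHS]big_mkcond /=; apply: eq_bigr => v _; case: (e v u) => //; by rewrite mul0r.
rewrite (bigID (fun v => v \in X)) /=.
rewrite (eq_bigr (fun _ => cc S delta u / W * F (u |: X))); last first.
  by move=> v /andP[_ vX]; rewrite /fbias /cc /step vX.
rewrite [in X in _ + X](eq_bigr (fun _ => 1 / W * F (X :\ u))); last first.
  by move=> v /andP[_ vX]; rewrite /fbias /step (negbTE vX).
rewrite sum_const_pred [in X in _ + X]sum_const_pred -/((aa R e X u)) -/((bb R e X u)).
rewrite mulrDl; ring.
Qed.
Lemma alg_in (R : realType) (c a b d p M : R) : 1 <= c -> 0 <= a -> 0 <= b ->
  d = a + b -> 0 < d -> 0 <= p ->
  (c * a * (M ^+ 2 - p ^+ 2) + b * (M ^+ 2 - (p - d) ^+ 2)) / (c * a + b)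
   - (M ^+ 2 - p ^+ 2) <= 2 * p * b - 0.
Proof.
move=> c1 a0 b0 dE d0 p0.
have W0 : 0 < c * a + b by nra.
rewrite (_ : _ - _ = b * (2 * p * d - d ^+ 2) / (c * a + b)); last first.
  by field; rewrite gt_eqF.
rewrite ler_pdivrMr //.
have h1 : 0 <= 2 * p * b * ((c - 1) * a) by rewrite !mulr_ge0 //; nra.
have h2 : 0 <= b * d ^+ 2 by rewrite mulr_ge0 // sqr_ge0.
rewrite dE in h1 h2 *; nra.
Qed.

Lemma alg_out (R : realType) (c a b d p M : R) : 1 <= c -> 0 <= a -> 0 <= b ->
  d = a + b -> 0 < d -> 0 <= p ->
  (c * a * (M ^+ 2 - (p + d) ^+ 2) + b * (M ^+ 2 - p ^+ 2)) / (c * a + b)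
   - (M ^+ 2 - p ^+ 2) <= 2 * p * (- a) - d * a.
Proof.
move=> c1 a0 b0 dE d0 p0.
have W0 : 0 < c * a + b by nra.
rewrite (_ : _ - _ = - (c * a * (2 * p * d + d ^+ 2)) / (c * a + b)); last first.
  by field; rewrite gt_eqF.
rewrite ler_pdivrMr //.
have h1 : 0 <= (2 * p + d) * a * ((c - 1) * b) by rewrite !mulr_ge0 //; nra.
rewrite dE in h1 *; nra.
Qed.

Definition deg (R : realType) (V : finType) (e : rel V) (u : V) : R := \sum_(v | e v u) 1.
Definition phi (R : realType) (V : finType) (e : rel V) (X : {set V}) : R :=
  \sum_(v in X) deg R e v.
Definition Mx (R : realType) (V : finType) (e : rel V) : R := \sum_v deg R e v.
Definition hp (R : realType) (V : finType) (e : rel V) (X : {set V}) : R :=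
  Mx R e ^+ 2 - phi R e X ^+ 2.

Lemma deg_ge0 (R : realType) (V : finType) (e : rel V) u : 0 <= deg R e u.
Proof. by apply: sumr_ge0. Qed.

Lemma deg_ab (R : realType) (V : finType) (e : rel V) X u :
  deg R e u = aa R e X u + bb R e X u.
Proof. by rewrite /deg (bigID (fun v => v \in X)). Qed.

Lemma phi_ge0 (R : realType) (V : finType) (e : rel V) X : 0 <= phi R e X.
Proof. by apply: sumr_ge0 => v _; apply: deg_ge0. Qed.

Lemma phi_le (R : realType) (V : finType) (e : rel V) X : phi R e X <= Mx R e.
Proof.
rewrite /Mx (bigID (fun v => v \in X)) /= lerDl.
by apply: sumr_ge0 => v _; apply: deg_ge0.
Qed.

Lemma hp_ge0 (R : realType) (V : finType) (e : rel V) X : 0 <= hp R e X.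
Proof.
rewrite /hp subr_ge0; have := phi_ge0 R e X; have := phi_le R e X.
move=> h1 h2; nra.
Qed.

Lemma hp_le (R : realType) (V : finType) (e : rel V) X : hp R e X <= Mx R e ^+ 2.
Proof. by rewrite /hp lerBlDr lerDl sqr_ge0. Qed.

Lemma phiU1 (R : realType) (V : finType) (e : rel V) (X : {set V}) u : u \notin X ->
  phi R e (u |: X) = phi R e X + deg R e u.
Proof. by move=> uX; rewrite /phi big_setU1 //= addrC. Qed.

Lemma phiD1 (R : realType) (V : finType) (e : rel V) (X : {set V}) u : u \in X ->
  phi R e (X :\ u) = phi R e X - deg R e u.
Proof. by move=> uX; rewrite /phi (big_setD1 _ uX) /= addrC addrK. Qed.

Lemma Tu_bound (R : realType) (V : finType) (e : rel V) (S : {set V}) (delta : R)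
  (hd : 0 <= delta) (X : {set V}) u : 0 < deg R e u ->
  \sum_v pick_prob e S delta X u v * hp R e (step X u v) - hp R e X <=
  2 * phi R e X * (if u \in X then bb R e X u else - aa R e X u)
  - (if u \in X then 0 else deg R e u * aa R e X u).
Proof.
move=> d0; rewrite pick_sum W_eq.
have c1 : 1 <= cc S delta u by rewrite /cc; case: (u \in S); lra.
have a0 : 0 <= aa R e X u by apply: sumr_ge0.
have b0 : 0 <= bb R e X u by apply: sumr_ge0.
have p0 := phi_ge0 R e X.
case: (boolP (u \in X)) => uX.
- have -> : u |: X = X by apply/setP => w; rewrite !inE; case: eqP => // ->.
  rewrite /hp phiD1 //; apply: alg_in => //; exact: deg_ab.
- have -> : X :\ u = X.
    by apply/setP => w; rewrite !inE; case: eqP => // ->; rewrite (negbTE uX).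
  rewrite /hp phiU1 //; apply: alg_out => //; exact: deg_ab.
Qed.

Lemma sum_r0 (R : realType) (V : finType) (e : rel V) (e_sym : symmetric e) (X : {set V}) :
  \sum_u (if u \in X then bb R e X u else - aa R e X u) = 0.
Proof.
pose g u v : R := if e v u then (if u \in X then (v \notin X)%:R else - (v \in X)%:R) else 0.
have -> : \sum_u (if u \in X then bb R e X u else - aa R e X u) = \sum_u \sum_v g u v.
  apply: eq_bigr => u _; rewrite /g; case: (u \in X).
    rewrite /bb big_mkcond; apply: eq_bigr => v _.
    by case: (e v u) => //=; case: (v \in X).
  rewrite /aa big_mkcond -sumrN; apply: eq_bigr => v _.
  by case: (e v u) => //=; case: (v \in X) => //=; rewrite oppr0.
set T := \sum_u _.
have : T + T = 0.
  rewrite {2}/T exchange_big -big_split /=; apply: big1 => u _.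
  rewrite -big_split /=; apply: big1 => v _.
  rewrite /g (e_sym u v); case: (e v u); last by rewrite addr0.
  by case: (u \in X); case: (v \in X) => /=; rewrite ?oppr0 ?addr0 ?subrr ?addNr.
lra.
Qed.

Lemma trans_exp (R : realType) (V : finType) (e : rel V) (S : {set V}) (delta : R)
  (X : {set V}) (H : {set V} -> R) :
  \sum_Y trans e S delta X Y * H Y =
  #|V|%:R^-1 * \sum_u \sum_v pick_prob e S delta X u v * H (step X u v).
Proof.
rewrite /trans; under eq_bigr do rewrite -mulrA.
rewrite -big_distrr /=; congr (_ * _).
transitivity (\sum_Y \sum_u \sum_v
   pick_prob e S delta X u v * (step X u v == Y)%:R * H Y).
  apply: eq_bigr => Y _; rewrite big_distrl; apply: eq_bigr => u _.
  by rewrite big_distrl.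
rewrite exchange_big; apply: eq_bigr => u _; rewrite exchange_big.
apply: eq_bigr => v _.
rewrite (bigD1 (step X u v)) //= eqxx mulr1 big1 ?addr0 //.
by move=> Y /negbTE; rewrite eq_sym => ->; rewrite mulr0 mul0r.
Qed.

Lemma nonabs_ex (V : finType) (X : {set V}) : ~~ absorbing X ->
  (exists x, x \in X) /\ (exists y, y \notin X).
Proof.
rewrite /absorbing negb_or => /andP[X0 XT]; split.
  by case/set0Pn: X0 => x; exists x.
case: (pickP (fun y => y \notin X)) => [y Hy | H]; first by exists y.
exfalso; move/eqP: XT; apply; apply/setP => y; rewrite inE.
by move: (H y) => /= /negbFE.
Qed.

Lemma deg_pos (R : realType) (V : finType) (e : rel V) (e_sym : symmetric e)
  (e_conn : forall u v : V, connect e u v) (X : {set V}) :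
  ~~ absorbing X -> forall u, 0 < deg R e u.
Proof.
move=> nX u; have [[x xX] [y yX]] := nonabs_ex nX.
have [w wu] : exists w, w != u.
  case: (eqVneq x u) => [xu|]; last by exists x.
  by exists y; apply/eqP => yu; move: yX; rewrite yu -xu xX.
have /connectP[p pp wE] := e_conn u w.
case: p pp wE => [|z p] /=; first by move=> _ wE; rewrite wE eqxx in wu.
move=> /andP[euz _] _.
rewrite /deg (bigD1 z) /=; last by rewrite e_sym.
apply: (lt_le_trans ltr01); rewrite lerDl; apply: sumr_ge0 => *; exact: ler01.
Qed.

Lemma boundary (V : finType) (e : rel V) (e_sym : symmetric e)
  (e_conn : forall u v : V, connect e u v) (X : {set V}) :
  ~~ absorbing X -> exists u v, [/\ u \notin X, v \in X & e v u].
Proof.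
move=> nX; have [[x xX] [y yX]] := nonabs_ex nX.
case: (boolP [exists u, [exists v, (u \notin X) && (v \in X) && e v u]]).
  by case/existsP => u /existsP [v /andP[/andP[? ?] ?]]; exists u, v.
move=> H; exfalso.
have cl : closed_mem e (mem X).
  move=> a b eab /=.
  case aX: (a \in X); case bX: (b \in X) => //.
    by move/existsPn: H => /(_ b) /existsPn /(_ a); rewrite bX aX eab.
  by move/existsPn: H => /(_ a) /existsPn /(_ b); rewrite bX aX e_sym eab.
by have := closed_connect cl (e_conn x y); rewrite xX (negbTE yX).
Qed.

Lemma drift (R : realType) (V : finType) (e : rel V) (S : {set V}) (delta : R)
  (hd : 0 <= delta) (e_sym : symmetric e) (e_conn : forall u v : V, connect e u v)
  (V_ne : (0 < #|V|)%N) (X : {set V}) : ~~ absorbing X ->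
  \sum_Y trans e S delta X Y * hp R e Y <= hp R e X - #|V|%:R^-1.
Proof.
move=> nX; rewrite trans_exp.
have n0 : 0 < (#|V|%:R : R) by rewrite ltr0n.
have HT : \sum_u (\sum_v pick_prob e S delta X u v * hp R e (step X u v) - hp R e X)
    <= -1.
  apply: (@le_trans _ _ (\sum_u (2 * phi R e X *
     (if u \in X then bb R e X u else - aa R e X u) -
     (if u \in X then 0 else deg R e u * aa R e X u)))).
    by apply: ler_sum => u _; apply: Tu_bound => //; apply: (deg_pos R e_sym e_conn nX).
  rewrite sumrB -big_distrr /= sum_r0 // mulr0 sub0r lerN2.
  have [u0 [v0 [u0X v0X e0]]] := boundary e_sym e_conn nX.
  rewrite (bigD1 u0) //= (negbTE u0X).
  have a1 : 1 <= aa R e X u0.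
    rewrite /aa (bigD1 v0) /=; last by rewrite e0 v0X.
    by rewrite lerDl; apply: sumr_ge0 => *; exact: ler01.
  have b0 : 0 <= bb R e X u0 by apply: sumr_ge0 => *; exact: ler01.
  have rest : 0 <= \sum_(i | i != u0) (if i \in X then 0 else deg R e i * aa R e X i).
    apply: sumr_ge0 => i _; case: (i \in X) => //.
    by apply: mulr_ge0; [apply: deg_ge0 | apply: sumr_ge0 => *; exact: ler01].
  rewrite (deg_ab R e X u0); nra.
have -> : \sum_u \sum_v pick_prob e S delta X u v * hp R e (step X u v) =
    \sum_u (hp R e X + (\sum_v pick_prob e S delta X u v * hp R e (step X u v) - hp R e X)).
  by apply: eq_bigr => u _; rewrite addrC subrK.
rewrite big_split /= sumr_const -[#|xpredT|]/#|V|.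
set T := \sum_i _ in HT *; set h := hp R e X.
rewrite -[h *+ #|V|]mulr_natr.
set n := (#|V|%:R : R) in n0 HT *.
have -> : n^-1 * (h * n + T) = h + n^-1 * T by field; rewrite gt_eqF.
have ni : 0 < n^-1 by rewrite invr_gt0.
have h2 : n^-1 * T <= n^-1 * (-1) := ler_wpM2l (ltW ni) HT.
lra.
Qed.

Lemma pick_ge0 (R : realType) (V : finType) (e : rel V) (S : {set V}) (delta : R)
  (hd : 0 <= delta) X u v : 0 <= pick_prob e S delta X u v.
Proof.
have fb : forall x, 0 <= fbias S delta X x u by move=> x; rewrite /fbias; case: ifP => _; lra.
rewrite /pick_prob; case: (e v u) => //; apply: divr_ge0 => //.
by apply: sumr_ge0.
Qed.

Lemma trans_ge0 (R : realType) (V : finType) (e : rel V) (S : {set V}) (delta : R)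
  (hd : 0 <= delta) X Y : 0 <= trans e S delta X Y.
Proof.
apply: mulr_ge0; first by rewrite invr_ge0.
apply: sumr_ge0 => u _; apply: sumr_ge0 => v _; apply: mulr_ge0 => //.
exact: pick_ge0.
Qed.

Lemma init_ge0 (R : realType) (V : finType) (Y : {set V}) : 0 <= init_dist R Y.
Proof. by apply: mulr_ge0; [rewrite invr_ge0 | apply: sumr_ge0]. Qed.

Lemma surv_ge0 (R : realType) (V : finType) (e : rel V) (S : {set V}) (delta : R)
  (hd : 0 <= delta) t Y : 0 <= surv e S delta t Y.
Proof.
elim: t Y => [|t IH] Y /=; case: (absorbing Y) => //; first exact: init_ge0.
by apply: sumr_ge0 => X _; apply: mulr_ge0 => //; apply: trans_ge0.
Qed.

Lemma surv_abs (R : realType) (V : finType) (e : rel V) (S : {set V}) (delta : R)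
  t Y : absorbing Y -> surv e S delta t Y = 0.
Proof. by case: t => [|t] /= ->. Qed.

Lemma init_sum (R : realType) (V : finType) (V_ne : (0 < #|V|)%N) :
  \sum_(Y : {set V}) init_dist R Y = 1.
Proof.
rewrite /init_dist -big_distrr /= exchange_big /=.
rewrite (eq_bigr (fun _ => 1)); last first.
  move=> u _; rewrite (bigD1 [set u]) //= eqxx big1 ?addr0 //.
  by move=> Y /negbTE ->.
rewrite sumr_const -[#|xpredT|]/#|V| mulVf //.
by rewrite pnatr_eq0 -lt0n.
Qed.

Definition mm (R : realType) (V : finType) (e : rel V) (S : {set V}) (delta : R) t : R :=
  \sum_Y surv e S delta t Y * hp R e Y.

Lemma m_step (R : realType) (V : finType) (e : rel V) (S : {set V}) (delta : R)
  (hd : 0 <= delta) (e_sym : symmetric e) (e_conn : forall u v : V, connect e u v)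
  (V_ne : (0 < #|V|)%N) t :
  mm e S delta t.+1 <= mm e S delta t - #|V|%:R^-1 * surv_prob e S delta t.
Proof.
rewrite /mm.
apply: (@le_trans _ _ (\sum_Y (\sum_X surv e S delta t X * trans e S delta X Y) * hp R e Y)).
  apply: ler_sum => Y _ /=; case: (absorbing Y) => //.
  rewrite mul0r; apply: mulr_ge0; last exact: hp_ge0.
  apply: sumr_ge0 => X _; apply: mulr_ge0; [exact: surv_ge0 | exact: trans_ge0].
have -> : \sum_Y (\sum_X surv e S delta t X * trans e S delta X Y) * hp R e Y =
    \sum_X surv e S delta t X * \sum_Y trans e S delta X Y * hp R e Y.
  under eq_bigr do rewrite big_distrl /=.
  rewrite exchange_big; apply: eq_bigr => X _; rewrite big_distrr /=.
  by apply: eq_bigr => Y _; rewrite mulrA.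
rewrite /surv_prob big_distrr -sumrB; apply: ler_sum => X _.
case: (boolP (absorbing X)) => aX.
  by rewrite surv_abs // /= !mul0r mulr0 subrr.
have s0 := surv_ge0 e S hd t X.
have H := ler_wpM2l s0 (@drift _ _ e S delta hd e_sym e_conn V_ne X aX).
rewrite mulrBr in H; apply: (le_trans H); rewrite [_ / _]mulrC; exact: lexx.
Qed.

Lemma partial (R : realType) (V : finType) (e : rel V) (S : {set V}) (delta : R)
  (hd : 0 <= delta) (e_sym : symmetric e) (e_conn : forall u v : V, connect e u v)
  (V_ne : (0 < #|V|)%N) N :
  #|V|%:R^-1 * \sum_(t < N) surv_prob e S delta t <= mm e S delta 0 - mm e S delta N.
Proof.
elim: N => [|N IH]; first by rewrite big_ord0 mulr0 subrr.
rewrite big_ord_recr /= mulrDr.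
have := @m_step _ _ e S delta hd e_sym e_conn V_ne N; lra.
Qed.

Lemma mm_ge0 (R : realType) (V : finType) (e : rel V) (S : {set V}) (delta : R)
  (hd : 0 <= delta) N : 0 <= mm e S delta N.
Proof.
by apply: sumr_ge0 => Y _; apply: mulr_ge0; [exact: surv_ge0 | exact: hp_ge0].
Qed.

Lemma mm0_le (R : realType) (V : finType) (e : rel V) (S : {set V}) (delta : R)
  (V_ne : (0 < #|V|)%N) : mm e S delta 0 <= Mx R e ^+ 2.
Proof.
rewrite /mm; apply: (@le_trans _ _ (\sum_Y init_dist R Y * Mx R e ^+ 2)).
  apply: ler_sum => Y _; apply: ler_pM; [|exact: hp_ge0| |exact: hp_le].
    by rewrite /=; case: (absorbing Y) => //; exact: init_ge0.
  by rewrite /=; case: (absorbing Y) => //; exact: init_ge0.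
by rewrite -big_distrl /= init_sum // mul1r.
Qed.

Lemma deg_le (R : realType) (V : finType) (e : rel V) u : deg R e u <= #|V|%:R.
Proof.
rewrite /deg; apply: (@le_trans _ _ (\sum_(v : V) (1 : R))).
  rewrite [X in _ <= X](bigID (fun v => e v u)) /= lerDl.
  by apply: sumr_ge0 => *; exact: ler01.
by rewrite sumr_const -[#|xpredT|]/#|V|.
Qed.

Lemma Mx_bounds (R : realType) (V : finType) (e : rel V) :
  0 <= Mx R e <= #|V|%:R * #|V|%:R.
Proof.
apply/andP; split; first by apply: sumr_ge0 => v _; exact: deg_ge0.
apply: (@le_trans _ _ (\sum_(v : V) (#|V|%:R : R))).
  by apply: ler_sum => v _; exact: deg_le.
by rewrite sumr_const -[#|xpredT|]/#|V| mulr_natr.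
Qed.

Unset Implicit Arguments.

Theorem mainTheorem1 (R : realType) (V : finType) (e : rel V)
  (e_sym : symmetric e) (e_irr : irreflexive e)
  (V_ne : (0 < #|V|)%N) (e_conn : forall u v : V, connect e u v)
  (S : {set V}) (delta : R) (hdelta : 1 <= delta) :
  (absorption_time e S delta <= ((#|V| ^ 5)%N)%:R%:E)%E.
Proof.
have hd : 0 <= delta by lra.
have n0 : 0 < (#|V|%:R : R) by rewrite ltr0n.
have Hpart : forall N, \sum_(t < N) surv_prob e S delta t <= ((#|V| ^ 5)%N)%:R.
  move=> N.
  have P := @partial _ _ e S delta hd e_sym e_conn V_ne N.
  have m0 := @mm_ge0 _ _ e S delta hd N.
  have m1 := @mm0_le _ _ e S delta V_ne.
  have /andP[M0 M1] := Mx_bounds R e.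
  rewrite natrX.
  set n := (#|V|%:R : R) in n0 P M1 *.
  set s := \sum_(t < N) _ in P *.
  set M := Mx R e in M0 M1 m1.
  have -> : s = n * (n^-1 * s) by field; rewrite gt_eqF.
  have h1 : n^-1 * s <= M ^+ 2 by lra.
  have h2 : M ^+ 2 <= (n * n) ^+ 2 by rewrite ler_pXn2r // ?nnegrE //; nra.
  have h3 : n * (n^-1 * s) <= n * (M ^+ 2) by apply: ler_wpM2l; lra.
  have h4 : n * (M ^+ 2) <= n * ((n * n) ^+ 2) by apply: ler_wpM2l; lra.
  have -> : n ^+ 5 = n * ((n * n) ^+ 2) by ring.
  lra.
rewrite /absorption_time.
apply: (lime_le (is_cvg_nneseries _)).
  by move=> t _ _; rewrite lee_fin; apply: sumr_ge0 => Y _; exact: surv_ge0.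
apply: nearW => k; rewrite sumEFin lee_fin big_mkord; exact: Hpart.
Qed.
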